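(* Let $\Omega=[0,1]^d$ and let $\mathbb{P}$ be a probability measure for a pair $(X,Y)$ with $X\in\Omega$ and $Y\in\{0,1\}$. Let $T$ and $T'$ be two classification trees on $\Omega$, each having $k$ leaf nodes; denote the leaf nodes of $T$ by $A_1,\dots,A_k$ and those of $T'$ by $A_1',\dots,A_k'$. If for some $\epsilon\ge 0$ $$\sup_{1\le j\le k}\mathbb{P}(A_j\,\triangle\,A_j')\le \epsilon,$$ then $$|I(T,\mathbb{P})-I(T',\mathbb{P})|\le 5k\epsilon .$$
   Context: A classification tree on $\Omega$ is obtained by recursively splitting $\Omega$ with axis-aligned cuts $\{X[j]\le z\}$ / $\{X[j]>z\}$; its leaf nodes are hyperrectangles forming a partition of $\Omega$. For a set $A\subset\Omega$, $\mathbb{P}(A)$ denotes $\mathbb{P}(X\in A)$, $\triangle$ denotes symmetric set difference, and $\eta(A)=\mathbb{E}_{\mathbb{P}}(Y\mid X\in A)$. The (Gini) impurity of a node $A$ is $I(A,\mathbb{P})=2\eta(A)(1-\eta(A))$, and the impurity of a tree $T$ with leaf nodes $A_1,\dots,A_k$ is $I(T,\mathbb{P})=\sum_{l=1}^k \mathbb{P}(A_l)\,I(A_l,\mathbb{P})$ (a leaf with $\mathbb{P}(A_l)=0$ contributes $0$). *)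

(* Defs.v *)
From HB Require Import structures.
From mathcomp Require Import all_boot all_order all_algebra.
From mathcomp Require Import all_classical all_reals all_analysis.
Set Implicit Arguments. Unset Strict Implicit. Unset Printing Implicit Defensive.
Import Order.TTheory GRing.Theory Num.Theory.
Local Open Scope classical_set_scope.
Local Open Scope ring_scope.

Definition unitcube (R : realType) (d : nat) : set ('I_d -> R) :=
  [set x | forall i, 0 <= x i <= 1].

(* Classification trees: recursive axis-aligned splits {x j <= z} / {x j > z}. *)
Inductive ctree (R : realType) (d : nat) : Type :=
| CLeaf : ctree R d
| CNode : 'I_d -> R -> ctree R d -> ctree R d -> ctree R d.

Fixpoint leaves_from (R : realType) (d : nat) (A : set ('I_d -> R))
  (t : ctree R d) : seq (set ('I_d -> R)) :=
  match t with
  | CLeaf => [:: A]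
  | CNode j z l r =>
      leaves_from (A `&` [set x | x j <= z]) l ++
      leaves_from (A `&` [set x | z < x j]) r
  end.

Definition leaves (R : realType) (d : nat) (t : ctree R d) :=
  @leaves_from R d (@unitcube R d) t.

Definition symdiff (U : Type) (A B : set U) : set U := (A `\` B) `|` (B `\` A).

Section Impurity.
Context (dT : measure_display) (T : measurableType dT) (R : realType) (d : nat).
Context (P : probability T R) (X : T -> ('I_d -> R)) (Y : T -> bool).

Definition PX (A : set ('I_d -> R)) : R := fine (P (X @^-1` A)).

Definition eta (A : set ('I_d -> R)) : R :=
  fine (P (X @^-1` A `&` [set w | Y w])) / PX A.

Definition node_impurity (A : set ('I_d -> R)) : R := 2 * eta A * (1 - eta A).

Definition tree_impurity (t : ctree R d) : R :=
  \sum_(A <- leaves t) (if PX A == 0 then 0 else PX A * node_impurity A).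
End Impurity.

(* Main.v *)
Require Import Defs.
From HB Require Import structures.
From mathcomp Require Import all_boot all_order all_algebra.
From mathcomp Require Import all_classical all_reals all_analysis.
From mathcomp Require Import ring lra.
Import Order.TTheory GRing.Theory Num.Theory.
Local Open Scope classical_set_scope.
Local Open Scope ring_scope.

Section Aux.
Context (dT : measure_display) (T : measurableType dT) (R : realType).
Context (P : probability T R).

Let mu (S : set T) : R := fine (P S).

Lemma mu_ge0 S : 0 <= fine (P S).
Proof. by apply: fine_ge0; apply: measure_ge0. Qed.

Lemma mu_split S U : measurable S -> measurable U ->
  fine (P S) = fine (P (S `\` U)) + fine (P (S `&` U)).
Proof.
move=> mS mU; rewrite (measureDI P mS mU) fineD //.
  by apply: fin_num_measure; apply: measurableD.
by apply: fin_num_measure; apply: measurableI.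
Qed.

Lemma mu_le S U : measurable S -> measurable U -> S `<=` U ->
  fine (P S) <= fine (P U).
Proof.
move=> mS mU SU; apply: fine_le; try exact: fin_num_measure.
by apply: le_measure; rewrite ?inE.
Qed.
End Aux.
Arguments mu_ge0 {dT T R} P S.
Arguments mu_split {dT T R} P {S U}.
Arguments mu_le {dT T R} P {S U}.


Definition G {R : realType} (p q : R) : R :=
  if p == 0 then 0 else p * (2 * (q / p) * (1 - q / p)).

Lemma G_key (R : realType) (p q p1 q1 : R) :
  0 <= q1 -> q1 <= p1 -> 0 <= q - q1 -> q - q1 <= p - p1 ->
  `| G p q - G p1 q1 | <= 4 * (p - p1).
Proof.
move=> h1 h2 h3 h4.
have Gf : forall x y : R, 0 < x -> G x y = 2 * y - 2 * (y ^+ 2 / x).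
  move=> x y x0; rewrite /G gt_eqF //; field; exact: lt0r_neq0.
have [p10|p1pos] := eqVneq p1 0.
  have q10 : q1 = 0 by lra.
  rewrite /G p10 eqxx subr0.
  case: ifP => [/eqP p0|/negbT ppos]; first by rewrite normr0; lra.
  have pp : 0 < p by rewrite lt0r ppos /=; lra.
  have -> : p * (2 * (q / p) * (1 - q / p)) = 2 * q - 2 * (q ^+ 2 / p).
    by field.
  have u0 : 0 <= q ^+ 2 / p by apply: divr_ge0 => //; [exact: sqr_ge0|lra].
  have u1 : q ^+ 2 / p <= q.
    rewrite ler_pdivrMr // expr2; apply: ler_wpM2l; lra.
  rewrite ger0_norm; lra.
have pp1 : 0 < p1 by rewrite lt0r p1pos /=; lra.
have pp : 0 < p by lra.
rewrite !Gf //.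
set u := q ^+ 2 / p; set v := q1 ^+ 2 / p1.
have hu : u * p = q ^+ 2 by rewrite /u mulfVK // lt0r_neq0.
have hv : v * p1 = q1 ^+ 2 by rewrite /v mulfVK // lt0r_neq0.
set a := p - p1.
have ppp : 0 < p * p1 by apply: mulr_gt0.
have e1 : u - v <= a.
  rewrite -(ler_pM2r ppp).
  have -> : (u - v) * (p * p1) = q ^+ 2 * p1 - q1 ^+ 2 * p.
    by rewrite -hu -hv; ring.
  have f5 : 0 <= a * (p1 - q1) ^+ 2 by apply: mulr_ge0; [rewrite /a; lra|exact: sqr_ge0].
  have f6 : 0 <= q1 * p1 * (a - (q - q1)).
    apply: mulr_ge0; [apply: mulr_ge0|rewrite /a]; lra.
  have f7 : 0 <= p1 * ((a - (q - q1)) * (a + (q - q1))).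
    apply: mulr_ge0; [|apply: mulr_ge0]; rewrite /a; lra.
  have -> : q = q1 + (q - q1) by ring.
  have -> : p = p1 + a by rewrite /a; ring.
  move: f5 f6 f7; set b := q - q1; move: a b => a b f5 f6 f7.
  rewrite -subr_ge0 [X in 0 <= X](_ : _ = a * (p1 - q1) ^+ 2 + 2 * (q1 * p1 * (a - b)) + p1 * ((a - b) * (a + b))); last by ring.
  lra.
have e2 : v - u <= a.
  rewrite -(ler_pM2r ppp).
  have -> : (v - u) * (p * p1) = q1 ^+ 2 * p - q ^+ 2 * p1.
    by rewrite -hu -hv; ring.
  have f5 : 0 <= ((q - q1) * (q + q1)) * p1 by apply: mulr_ge0; [apply: mulr_ge0|]; lra.
  have f6 : 0 <= a * ((p1 - q1) * (p1 + q1)).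
    apply: mulr_ge0; [|apply: mulr_ge0]; rewrite /a; lra.
  have f7 : 0 <= a * a * p1.
    apply: mulr_ge0; [apply: mulr_ge0|]; rewrite /a; lra.
  have -> : p = p1 + a by rewrite /a; ring.
  move: f5 f6 f7; clear e1; move: a => a f5 f6 f7.
  rewrite -subr_ge0 [X in 0 <= X](_ : _ = ((q - q1) * (q + q1)) * p1 + a * ((p1 - q1) * (p1 + q1)) + a * a * p1); last by ring.
  lra.
rewrite /a in e1 e2 *; clearbody u v. rewrite ler_norml; apply/andP; split; lra.
Qed.

Lemma one_side dT (T : measurableType dT) (R : realType) (P : probability T R)
  (a b y : set T) : measurable a -> measurable b -> measurable y ->
  `| G (fine (P a)) (fine (P (a `&` y))) - G (fine (P (a `&` b))) (fine (P (a `&` b `&` y))) |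
  <= 4 * fine (P (a `\` b)).
Proof.
move=> ma mb my.
have mab : measurable (a `&` b) by exact: measurableI.
have may : measurable (a `&` y) by exact: measurableI.
have maby : measurable (a `&` b `&` y) by exact: measurableI.
have E1 := mu_split P ma mb.
have E2 := mu_split P may mb.
have E3 : a `&` y `&` b = a `&` b `&` y by rewrite -setIA (setIC y) setIA.
rewrite E3 in E2.
have L1 : fine (P (a `&` y `\` b)) <= fine (P (a `\` b)).
  apply: mu_le; [exact: measurableD|exact: measurableD|].
  by move=> w [[aw _] nb].
have L2 : fine (P (a `&` b `&` y)) <= fine (P (a `&` b)).
  by apply: mu_le => // w [].
have Z := mu_ge0 P (a `&` b `&` y).
have Z2 := mu_ge0 P (a `&` y `\` b).
have H := @G_key R (fine (P a)) (fine (P (a `&` y))) (fine (P (a `&` b))) (fine (P (a `&` b `&` y))).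
 have: `| G (fine (P a)) (fine (P (a `&` y))) - G (fine (P (a `&` b))) (fine (P (a `&` b `&` y))) |
  <= 4 * (fine (P a) - fine (P (a `&` b))) by apply: H; lra.
suff -> : fine (P a) - fine (P (a `&` b)) = fine (P (a `\` b)) by [].
lra.
Qed.
Arguments one_side {dT T R} P {a b y}.

Lemma leaf_bound dT (T : measurableType dT) (R : realType) (d : nat) (P : probability T R)
  (X : T -> ('I_d -> R)) (Y : T -> bool) (A B : set ('I_d -> R)) :
  measurable (X @^-1` A) -> measurable (X @^-1` B) -> measurable [set w | Y w] ->
  `| G (PX P X A) (fine (P (X @^-1` A `&` [set w | Y w])))
   - G (PX P X B) (fine (P (X @^-1` B `&` [set w | Y w]))) | <= 4 * PX P X (symdiff A B).
Proof.
rewrite /PX; set a := X @^-1` A; set b := X @^-1` B; set y := [set w | Y w].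
move=> ma mb my.
have h1 := one_side P ma mb my.
have h2 := one_side P mb ma my.
rewrite (setIC b a) in h2.
have -> : X @^-1` symdiff A B = (a `\` b) `|` (b `\` a) by [].
have ms : measurable ((a `\` b) `|` (b `\` a)).
  by apply: measurableU; apply: measurableD.
have E := mu_split P ms ma.
have e1 : ((a `\` b) `|` (b `\` a)) `\` a = b `\` a.
  by apply/seteqP; split => w /=; tauto.
have e2 : ((a `\` b) `|` (b `\` a)) `&` a = a `\` b.
  by apply/seteqP; split => w /=; tauto.
rewrite e1 e2 in E.
set GA := G _ _ in h1 *; set GB := G (fine (P b)) _ in h2 *.
set GC := G _ _ in h1; set GC' := G _ _ in h2.

rewrite E.
have := ler_distD GC GA GB.
rewrite distrC in h2.
rewrite /GA /GB /GC /GC' in h1 h2 *.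
lra.
Qed.

Lemma leaves_meas dT (T : measurableType dT) (R : realType) (d : nat)
  (X : T -> ('I_d -> R))
  (hX : forall i : 'I_d, measurable_fun setT (fun w => X w i)) :
  forall (t : ctree R d) (A : set ('I_d -> R)), measurable (X @^-1` A) ->
  forall i, measurable (X @^-1` nth set0 (leaves_from A t) i).
Proof.
have hle : forall (j : 'I_d) (z : R), measurable [set w | X w j <= z].
  move=> j z; have := hX j measurableT _ (measurable_itv `]-oo, z]).
  rewrite setTI; congr measurable; apply/seteqP; split => w /=;
    by rewrite in_itv /=.
have hgt : forall (j : 'I_d) (z : R), measurable [set w | z < X w j].
  move=> j z; have := hX j measurableT _ (measurable_itv `]z, +oo[).
  rewrite setTI; congr measurable; apply/seteqP; split => w /=;
    by rewrite in_itv /= andbT.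
elim=> [|j z l IHl r IHr] A mA i /=.
  case: i => [|i] //=; rewrite nth_nil preimage_set0; exact: measurable0.
rewrite nth_cat; case: ifP => _.
  by apply: IHl; exact: (measurableI _ _ mA (hle j z)).
by apply: IHr; exact: (measurableI _ _ mA (hgt j z)).
Qed.

Theorem mainTheorem1 (dT : measure_display) (T : measurableType dT) (R : realType)
  (d : nat) (P : probability T R) (X : T -> ('I_d -> R)) (Y : T -> bool)
  (hX : forall i : 'I_d, measurable_fun setT (fun w => X w i))
  (hY : measurable [set w | Y w])
  (hXO : forall w, X w \in @unitcube R d)
  (k : nat) (t t' : ctree R d)
  (hk : size (leaves t) = k) (hk' : size (leaves t') = k)
  (eps : R) (heps : 0 <= eps)
  (hsup : forall j : 'I_k,
     PX P X (symdiff (nth set0 (leaves t) j) (nth set0 (leaves t') j)) <= eps) :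
  `| tree_impurity P X Y t - tree_impurity P X Y t' | <= 5 * k%:R * eps.
Proof.
have mU : measurable (X @^-1` @unitcube R d).
  suff -> : X @^-1` @unitcube R d = setT by [].
  by apply/seteqP; split => w // _; have := hXO w; rewrite inE.
have ML := @leaves_meas dT T R d X hX t _ mU.
have ML' := @leaves_meas dT T R d X hX t' _ mU.
have Ti : forall s : ctree R d, size (leaves s) = k -> tree_impurity P X Y s =
   \sum_(i < k) G (PX P X (nth set0 (leaves s) i))
        (fine (P (X @^-1` (nth set0 (leaves s) i) `&` [set w | Y w]))).
  move=> s hs; rewrite /tree_impurity (big_nth set0) hs big_mkord.
  by apply: eq_bigr.
rewrite (Ti t hk) (Ti t' hk') -sumrB.
apply: (le_trans (ler_norm_sum _ _ _)).
apply: (le_trans (y := \sum_(i < k) 4 * eps)).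
  apply: ler_sum => i _.
  apply: le_trans (@leaf_bound dT T R d P X Y _ _ (ML i) (ML' i) hY) _.
  by apply: ler_wpM2l => //; apply: hsup.
rewrite sumr_const card_ord -mulr_natr.
have k0 : 0 <= k%:R :> R by [].
nra.
Qed.
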